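(* Let $C$ be a closed cone with nonempty interior $\operatorname{int} C$ in a real Banach space $X$. If $f:\operatorname{int} C\to\operatorname{int} C$ is nonexpansive with respect to Thompson's metric $d_T$, then for every $0<\alpha<1$ the map $\alpha f+(1-\alpha)\operatorname{id}$ is also nonexpansive on $(\operatorname{int} C,d_T)$.
   Context: A closed cone is a closed convex set $C\subset X$ with $\lambda C\subseteq C$ for all $\lambda\ge 0$ and $C\cap(-C)=\{0\}$. It induces the partial order $x\le y$ iff $y-x\in C$. For $x,y\in C$, $M(x/y)=\inf\{\beta>0: x\le \beta y\}$. For $x,y\in\operatorname{int} C$, Thompson's metric is $d_T(x,y)=\log\max\{M(x/y),M(y/x)\}=\log\inf\{\beta\ge 1:\beta^{-1}x\le y\le \beta x\}$. A map $g$ is $d_T$-nonexpansive if $d_T(g(x),g(y))\le d_T(x,y)$ for all $x,y$. *)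

(* Defs.v *)
From HB Require Import structures.
From mathcomp Require Import all_boot all_order all_algebra.
From mathcomp Require Import all_classical all_reals all_analysis.
Set Implicit Arguments. Unset Strict Implicit. Unset Printing Implicit Defensive.
Import Order.TTheory GRing.Theory Num.Theory.
Import numFieldNormedType.Exports.
Local Open Scope classical_set_scope.
Local Open Scope ring_scope.

Definition closed_cone {R : realType} {X : normedModType R} (C : set X) : Prop :=
  [/\ closed C,
      (forall x y (t : R), C x -> C y -> 0 <= t -> t <= 1 -> C (t *: x + (1 - t) *: y)),
      (forall (l : R) x, 0 <= l -> C x -> C (l *: x)) &
      (forall x, C x -> C (- x) -> x = 0)].

Definition cone_le {R : realType} {X : normedModType R} (C : set X) (x y : X) : Prop :=
  C (y - x).

Definition coneM {R : realType} {X : normedModType R} (C : set X) (x y : X) : R :=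
  inf [set beta : R | 0 < beta /\ cone_le C x (beta *: y)].

Definition thompson {R : realType} {X : normedModType R} (C : set X) (x y : X) : R :=
  ln (Num.max (coneM C x y) (coneM C y x)).

(* Main.v *)
Require Import Defs.
From HB Require Import structures.
From mathcomp Require Import all_boot all_order all_algebra.
From mathcomp Require Import all_classical all_reals all_analysis.
From mathcomp Require Import ring lra.
Import Order.TTheory GRing.Theory Num.Theory.
Import numFieldNormedType.Exports.
Local Open Scope classical_set_scope.
Local Open Scope ring_scope.

Section Aux.
Variables (R : realType) (X : completeNormedModType R) (C : set X).
Hypothesis hC : closed_cone C.

Lemma cadd x y : C x -> C y -> C (x + y).
Proof.
case: hC => _ hconv hsc _ Cx Cy.
have h := hconv x y (2^-1) Cx Cy.
have h2 : C (2^-1 *: x + (1 - 2^-1) *: y) by apply: h; lra.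
have := hsc 2 _ _ h2.
have -> : 2 *: (2^-1 *: x + (1 - 2^-1) *: y) = x + y.
  rewrite scalerDr !scalerA mulfV ?pnatr_eq0 // scale1r.
  have -> : (2 * (1 - 2^-1) : R) = 1.
    by rewrite mulrBr mulr1 mulfV ?pnatr_eq0 //; lra.
  by rewrite scale1r.
by apply; lra.
Qed.

Lemma cscale (l : R) x : 0 <= l -> C x -> C (l *: x).
Proof. by case: hC => _ _ hsc _; apply: hsc. Qed.

Lemma int_sub x : C° x -> C x.
Proof. exact: nbhs_singleton. Qed.

Lemma int_ball x : C° x -> exists2 e : R, 0 < e & forall z, `|x - z| < e -> C z.
Proof.
move=> /nbhs_ballP [e e0 he]; exists e => // z hz; apply: he.
by rewrite -ball_normE.
Qed.

Lemma int_comb p q (a : R) : C° p -> C q -> 0 < a -> C° (a *: p + q).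
Proof.
move=> /int_ball [e e0 he] Cq a0.
apply/nbhs_ballP; exists (a * e); first exact: mulr_gt0.
move=> z; rewrite -ball_normE /ball_ /= => hz.
have -> : z = a *: (p - a^-1 *: (a *: p + q - z)) + q.
  rewrite scalerDr scalerN scalerA mulfV ?gt_eqF // scale1r.
  by rewrite opprB opprD !addrA (addrC (a *: p) z) addrK subrK.
apply: cadd => //; apply: cscale; first exact: ltW.
apply: he; rewrite opprB addrC subrK normrZ gtr0_norm ?invr_gt0 //.
by rewrite ltr_pdivrMl.
Qed.

Lemma S_nonempty x y : C° y -> [set beta : R | 0 < beta /\ cone_le C x (beta *: y)] !=set0.
Proof.
move=> /int_ball [e e0 he].
set s := e / (`|x| + 1).
have n0 : 0 < `|x| + 1 by rewrite ltr_wpDl.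
have s0 : 0 < s by rewrite divr_gt0.
exists s^-1; split; first by rewrite invr_gt0.
rewrite /cone_le.
have -> : s^-1 *: y - x = s^-1 *: (y - s *: x).
  by rewrite scalerBr scalerA mulVf ?gt_eqF // scale1r.
apply: cscale; first by rewrite invr_ge0 ltW.
apply: he; rewrite opprB addrC subrK normrZ gtr0_norm //.
rewrite /s mulrAC ltr_pdivrMr // ltr_pM2l //; lra.
Qed.

Lemma coneM_ge0 x y : C° y -> 0 <= coneM C x y.
Proof.
move=> hy; apply: lb_le_inf; first exact: S_nonempty.
by move=> b [b0 _]; apply: ltW.
Qed.

Lemma above_coneM x y (b : R) : C° y -> coneM C x y < b -> C (b *: y - x).
Proof.
move=> hy hb; have [s [s0 hs] sb] := inf_lt (@S_nonempty x y hy) hb.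
have -> : b *: y - x = (b - s) *: y + (s *: y - x).
  by rewrite scalerBl addrA subrK.
apply: cadd => //; apply: cscale; last exact: int_sub.
by rewrite subr_ge0 ltW.
Qed.

Lemma coneM_le x y (b : R) : C° y -> 0 < b -> C (b *: y - x) -> coneM C x y <= b.
Proof.
move=> hy b0 hb; apply: ge_inf; last by split.
by exists 0 => z [z0 _]; apply: ltW.
Qed.

Lemma coneM_comb x y x' y' (a : R) : C° y -> C° y' -> 0 < a -> a < 1 ->
  C° (a *: y + (1 - a) *: y') ->
  coneM C (a *: x + (1 - a) *: x') (a *: y + (1 - a) *: y')
  <= Num.max (coneM C x y) (coneM C x' y').
Proof.
move=> hy hy' a0 a1 hv.
apply/unstable.ler_gtP => t ht.
have h1 : coneM C x y < t by apply: le_lt_trans ht; rewrite le_max lexx.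
have h2 : coneM C x' y' < t by apply: le_lt_trans ht; rewrite le_max lexx orbT.
have t0 : 0 < t by apply: le_lt_trans h1; apply: coneM_ge0.
apply: coneM_le => //.
have -> : t *: (a *: y + (1 - a) *: y') - (a *: x + (1 - a) *: x')
   = a *: (t *: y - x) + (1 - a) *: (t *: y' - x').
  rewrite !scalerBr !scalerDr !scalerA (mulrC t a) (mulrC t (1 - a)).
  by rewrite addrACA opprD.
apply: cadd; apply: cscale; try exact: above_coneM; lra.
Qed.

Lemma max_ge1 x y : ~ C° 0 -> C° x -> C° y ->
  1 <= Num.max (coneM C x y) (coneM C y x).
Proof.
move=> n0 hx hy; rewrite leNgt; apply/negP => hlt.
set m := Num.max _ _ in hlt.
set t := (m + 1) / 2.
have mt : m < t by rewrite /t; lra.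
have t1 : t < 1 by rewrite /t; lra.
have h1 : C (t *: y - x).
  by apply: above_coneM => //; apply: le_lt_trans mt; rewrite le_max lexx.
have h2 : C (t *: x - y).
  by apply: above_coneM => //; apply: le_lt_trans mt; rewrite le_max lexx orbT.
have hs := @cadd _ _ h1 h2.
have hn : C (- (x + y)).
  have e1 : (t *: y - x) + (t *: x - y) = (t - 1) *: (x + y).
    by rewrite scalerBl scale1r scalerDr addrACA opprD (addrC (t *: y)).
  have -> : - (x + y) = (1 - t)^-1 *: ((t *: y - x) + (t *: x - y)).
    rewrite e1 scalerA -[t - 1]opprB mulrN mulVf ?subr_eq0 ?gt_eqF //.
    by rewrite scaleN1r.
  by apply: cscale => //; rewrite invr_ge0 subr_ge0 ltW.
have hp : C (x + y) by apply: cadd; apply: int_sub.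
have xy0 : x + y = 0 by case: hC => _ _ _ hpt; apply: hpt.
have ey : y = - x by apply/eqP; rewrite -subr_eq0 opprK addrC xy0.
have x0 : x = 0.
  case: hC => _ _ _ hpt; apply: hpt; first exact: int_sub.
  by rewrite -ey; apply: int_sub.
by apply: n0; rewrite -x0.
Qed.
End Aux.
Arguments cadd {R X C}.
Arguments cscale {R X C}.
Arguments int_sub {R X C}.
Arguments int_ball {R X C}.
Arguments int_comb {R X C}.
Arguments S_nonempty {R X C}.
Arguments coneM_ge0 {R X C}.
Arguments above_coneM {R X C}.
Arguments coneM_le {R X C}.
Arguments coneM_comb {R X C}.
Arguments max_ge1 {R X C}.

Theorem lemma2p1 (R : realType) (X : completeNormedModType R) (C : set X)
  (f : X -> X) :
  closed_cone C ->
  C° !=set0 ->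
  (forall x, C° x -> C° (f x)) ->
  (forall x y, C° x -> C° y -> thompson C (f x) (f y) <= thompson C x y) ->
  forall alpha : R, 0 < alpha -> alpha < 1 ->
    (forall x, C° x -> C° (alpha *: f x + (1 - alpha) *: x)) /\
    (forall x y, C° x -> C° y ->
       thompson C (alpha *: f x + (1 - alpha) *: x)
                  (alpha *: f y + (1 - alpha) *: y) <= thompson C x y).
Proof.
move=> hC _ hf hne alpha a0 a1.
have hcomb : forall x, C° x -> C° (alpha *: f x + (1 - alpha) *: x).
  move=> x hx; apply: int_comb => //; first exact: hf.
  by apply: cscale => //; [lra | apply: int_sub].
split => // x y hx hy.
case: (pselect (C° (0 : X))) => [h0|n0].
  have all0 : forall v : X, v = 0.
    move=> v; have [e e0 he] := int_ball _ h0.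
    have n1 : 0 < `|v| + 1 by rewrite ltr_wpDl.
    set k := e / 2 / (`|v| + 1).
    have k0 : 0 < k by rewrite /k !divr_gt0.
    have hkv : `|k *: v| < e.
      rewrite normrZ gtr0_norm // /k mulrAC ltr_pdivrMr //.
      have := normr_ge0 v; nra.
    have c1 : C (k *: v) by apply: he; rewrite sub0r normrN.
    have c2 : C (- (k *: v)) by apply: he; rewrite sub0r opprK.
    have : k *: v = 0 by case: hC => _ _ _ hpt; apply: hpt.
    by move/eqP; rewrite scaler_eq0 gt_eqF //= => /eqP.
  have -> : alpha *: f x + (1 - alpha) *: x = x by rewrite [LHS]all0 [RHS]all0.
  by have -> : alpha *: f y + (1 - alpha) *: y = y by rewrite [LHS]all0 [RHS]all0.
have Hu := hcomb x hx; have Hv := hcomb y hy.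
have hfx := hf x hx; have hfy := hf y hy.
have k1 := coneM_comb hC (f x) (f y) x y alpha hfy hy a0 a1 Hv.
have k2 := coneM_comb hC (f y) (f x) y x alpha hfx hx a0 a1 Hu.
have H := hne x y hx hy; move: H; rewrite /thompson.
set mu := Num.max (coneM C (alpha *: f x + (1 - alpha) *: x) _) _.
set mf := Num.max (coneM C (f x) (f y)) _.
set mx := Num.max (coneM C x y) _.
move=> H.
have g1 : 1 <= mu by apply: max_ge1.
have g2 : 1 <= mf by apply: max_ge1.
have g3 : 1 <= mx by apply: max_ge1.
have hle : mu <= Num.max mf mx.
  rewrite /mu ge_max; apply/andP; split;
    [apply: le_trans k1 _ | apply: le_trans k2 _];
    rewrite ge_max !le_max !lexx /= ?orbT //.
have pos : forall r : R, 1 <= r -> r \in Num.pos by move=> r hr; rewrite posrE; lra.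
case: (leP mf mx) => hm.
  rewrite ler_ln; [|exact: pos|exact: pos].
  by apply: le_trans hle _; rewrite ge_max hm lexx.
apply: le_trans H; rewrite ler_ln; [|exact: pos|exact: pos].
by apply: le_trans hle _; rewrite ge_max lexx ltW.
Qed.
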